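(* Let $n=p'q$ where $p',q$ are distinct primes both at least $7$, and let $A=L(n;p')$. Let $S=(x_1,x_2,x_3)$ be an $A$-extremal sequence for the Davenport constant in $\mathbb{Z}_n$. Then $S$ is equivalent with respect to $A$ to a sequence $(y_1,y_2,y_3)$ for which one of the following holds: (i) $y_1$ is the only term divisible by $q$, $y_1\neq 0$, and the image of $(y_2,y_3)$ under the natural map $\mathbb{Z}_n\to\mathbb{Z}_q$ is a $Q_q$-extremal sequence for the Davenport constant; (ii) $y_1$ is the only term coprime to $p'$, and the image of $(y_2,y_3)$ under the natural map $\mathbb{Z}_n\to\mathbb{Z}_q$ is a $Q_q$-extremal sequence for the Davenport constant.
   Context: $\mathbb{Z}_m$ is the integers mod $m$, $U(m)$ its unit group; for a prime $q$, $Q_q=\{x^2: x\in U(q)\}$. For nonempty $A\subseteq\mathbb{Z}_m\setminus\{0\}$, a sequence $(x_1,\ldots,x_k)$ is an $A$-weighted zero-sum sequence if $\sum a_ix_i=0$ for some $a_i\in A$; $D_A(m)$ is the least $k$ such that every length-$k$ sequence in $\mathbb{Z}_m$ has a nonempty $A$-weighted zero-sum subsequence; an $A$-extremal sequence for the Davenport constant is a sequence of length $D_A(m)-1$ with no $A$-weighted zero-sum subsequence. For a multiplicative group $A$, $(x_1,\ldots,x_k)$ and $(y_1,\ldots,y_k)$ are equivalent with respect to $A$ if there are $a_i\in A$, a unit $c$ and a permutation $\sigma$ with $y_{\sigma(i)}=c\,a_ix_i$ for all $i$. For odd $m=\prod p_i^{r_i}$, prime $p\mid m$ and $a\in U(m)$,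 $\left(\frac{a}{p}\right)$ is the Legendre symbol of the image mod $p$, $\left(\frac{a}{m}\right)=\prod\left(\frac{a}{p_i}\right)^{r_i}$, and $L(m;p')=\{a\in U(m):\left(\frac{a}{m}\right)=\left(\frac{a}{p'}\right)\}$ for a prime $p'\mid m$. *)

(* Defs.v *)
From HB Require Import structures.
From mathcomp Require Import all_boot all_order all_algebra all_fingroup.
Set Implicit Arguments. Unset Strict Implicit. Unset Printing Implicit Defensive.
Import Order.TTheory GRing.Theory Num.Theory.
Local Open Scope ring_scope.

Definition legendre (p a : nat) : int :=
  if (p %| a)%N then 0
  else if [exists x : 'I_p, (x * x) %% p == a %% p]%N then 1 else -1.

Definition jacobi (m a : nat) : int :=
  \prod_(p <- primes m) legendre p a ^+ logn p m.

Definition Lset (m p' : nat) : pred 'Z_m :=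
  fun a => (a \is a GRing.unit) && (jacobi m (val a) == legendre p' (val a)).

Definition Qset (q : nat) : pred 'Z_q :=
  fun y => [exists x : 'Z_q, (x \is a GRing.unit) && (y == x ^+ 2)].

Arguments Lset : clear implicits.
Arguments Qset : clear implicits.

Section WZS.
Variable R : comUnitRingType.

Definition has_wzs (A : pred R) (s : seq R) : Prop :=
  exists (I : {set 'I_(size s)}) (a : 'I_(size s) -> R),
    [/\ I != set0, (forall i, i \in I -> A (a i)) &
        \sum_(i in I) a i * s`_i = 0].

Definition is_davenport (A : pred R) (k : nat) : Prop :=
  (forall s : seq R, size s = k -> has_wzs A s) /\
  (forall k' : nat, (k' < k)%N -> ~ (forall s : seq R, size s = k' -> has_wzs A s)).

Definition extremal (A : pred R) (s : seq R) : Prop :=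
  exists k, [/\ is_davenport A k, size s = k.-1 & ~ has_wzs A s].

Definition equiv_wrt (A : pred R) (x y : seq R) : Prop :=
  size y = size x /\
  exists (sigma : {perm 'I_(size x)}) (a : 'I_(size x) -> R) (c : R),
    c \is a GRing.unit /\
    forall i : 'I_(size x), A (a i) /\ y`_(sigma i) = c * a i * x`_i.
End WZS.

(* Main.v *)
Require Import Defs.
From HB Require Import structures.
From mathcomp Require Import all_boot all_order all_algebra all_fingroup.
From mathcomp Require Import all_solvable.
From mathcomp Require Import zify ring.
Import GRing.Theory.
Local Open Scope ring_scope.

Section Qfacts.
Variable q : nat.
Hypothesis hq : prime q.
Hypothesis hq7 : (7 <= q)%N.
Local Notation Q := (Qset q).

Lemma q_gt1 : (1 < q)%N. Proof. exact: prime_gt1. Qed.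

Lemma valZ_lt (x : 'Z_q) : (val x < q)%N.
Proof. case: x => m; rewrite /= Zp_cast //; exact: q_gt1. Qed.

Lemma nz_unit (x : 'Z_q) : x != 0 -> x \is a GRing.unit.
Proof.
move=> nx; rewrite -(natr_Zp x) unitZpE ?q_gt1 // prime_coprime // gtnNdvd ?valZ_lt //.
by rewrite lt0n; apply: contraNneq nx => h; apply/eqP/val_inj.
Qed.

Lemma unit_nz (x : 'Z_q) : x \is a GRing.unit -> x != 0.
Proof. by apply: contraTneq => ->; rewrite unitr0. Qed.

Lemma natr_nz k : (0 < k < q)%N -> (k%:R : 'Z_q) != 0.
Proof.
case/andP => k0 kq; apply/eqP => h; have := val_Zp_nat q_gt1 k.
by rewrite h /= modn_small // => k0'; rewrite -k0' in k0.
Qed.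

Lemma Qsq x : x \is a GRing.unit -> Q (x ^+ 2).
Proof. by move=> Ux; apply/existsP; exists x; rewrite Ux eqxx. Qed.

Lemma QE y : Q y -> exists2 x, x \is a GRing.unit & y = x ^+ 2.
Proof. by case/existsP => x /andP[Ux /eqP ->]; exists x. Qed.

Lemma Qunit y : Q y -> y \is a GRing.unit.
Proof. by case/QE => x Ux ->; rewrite unitrX. Qed.

Lemma Q1 : Q 1.
Proof. by rewrite -(expr1n _ 2); apply: Qsq; rewrite unitr1. Qed.

Lemma QM x y : Q x -> Q y -> Q (x * y).
Proof.
case/QE => a Ua -> /QE [b Ub ->]; rewrite -exprMn; apply: Qsq; by rewrite unitrM Ua Ub.
Qed.

Lemma QV x : Q x -> Q x^-1.
Proof. case/QE => a Ua ->; rewrite -exprVn; apply: Qsq; by rewrite unitrV. Qed.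

Lemma QN x y : Q x -> y \is a GRing.unit -> ~~ Q y -> ~~ Q (x * y).
Proof.
move=> Qx Uy; apply: contra => Qxy.
by rewrite -(mulKr (Qunit _ Qx) y); apply: QM => //; apply: QV.
Qed.

Lemma Zq_gen : exists2 g : 'Z_q, g \is a GRing.unit &
  forall x, x \is a GRing.unit -> exists k, x = g ^+ k.
Proof.
have /cyclicP [g Hg] := units_Zp_cyclic hq.
exists (val g); first exact: (valP g).
move=> x Ux; have : FinRing.unit 'Z_q Ux \in units_Zp q by rewrite inE.
rewrite Hg => /cycleP [k Hk]; exists k.
by have := congr1 val Hk; rewrite FinRing.val_unitX.
Qed.

Lemma QNN x y : x \is a GRing.unit -> y \is a GRing.unit -> ~~ Q x -> ~~ Q y -> Q (x * y).
Proof.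
have [g Ug Hg] := Zq_gen.
have Hev k : ~~ odd k -> Q (g ^+ k).
  move=> ek; rewrite -(odd_double_half k) (negbTE ek) add0n -muln2 exprM.
  by apply: Qsq; rewrite unitrX.
move=> Ux Uy; have [i ->] := Hg x Ux; have [j ->] := Hg y Uy => nQx nQy.
have oi : odd i by case: (boolP (odd i)) => // oi; rewrite Hev in nQx.
have oj : odd j by case: (boolP (odd j)) => // oj; rewrite Hev in nQy.
by rewrite -exprD; apply: Hev; rewrite oddD oi oj.
Qed.

Lemma two_nz : (2%:R : 'Z_q) != 0.
Proof. apply: natr_nz; apply/andP; split => //; exact: leq_trans hq7. Qed.

Lemma nat_unit k : (0 < k < q)%N -> (k%:R : 'Z_q) \is a GRing.unit.
Proof. by move=> h; apply: nz_unit; apply: natr_nz. Qed.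

Lemma Nex : exists2 v : 'Z_q, v \is a GRing.unit & ~~ Q v.
Proof.
case: (boolP [exists v : 'Z_q, (v \is a GRing.unit) && ~~ Q v]).
  by case/existsP => v /andP[Uv nQv]; exists v.
rewrite negb_exists => /forallP H.
pose f := fun x : 'Z_q => x ^+ 2.
have onto : forall y, y \in codom f.
  move=> y; apply/codomP; have [->|ny] := eqVneq y 0.
    by exists 0; rewrite /f expr0n.
  have := H y; rewrite negb_and nz_unit //= negbK => /QE [x _ ->]; by exists x.
have inj : {in predT &, injective f}.
  apply/image_injP; rewrite eqn_leq leq_image_card /=.
  apply: subset_leq_card; apply/subsetP => y _; exact: onto y.
have h1 : (1 : 'Z_q) = -1 by apply: inj => //; rewrite /f sqrrN.
have : (2%:R : 'Z_q) == 0 by rewrite mulr2n {1}h1 addNr.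
by rewrite (negbTE two_nz).
Qed.

Lemma E1 : exists s, exists t, [/\ Q s, Q t, (s + t) \is a GRing.unit & ~~ Q (s + t)].
Proof.
case: (boolP [exists s : 'Z_q, exists t : 'Z_q,
   [&& Q s, Q t, (s+t) \is a GRing.unit & ~~ Q (s+t)]]).
  case/existsP => s /existsP [t /and4P [? ? ? ?]]; by exists s, t.
rewrite negb_exists => /forallP H.
have H2 s t : Q s -> Q t -> s + t = 0 \/ Q (s + t).
  move=> Qs Qt; have := H s; rewrite negb_exists => /forallP /(_ t); rewrite Qs Qt /=.
  have [->|nz] := eqVneq (s+t) 0; first by left.
  by rewrite nz_unit //= negbK; right.
have Hk k : (k%:R : 'Z_q) = 0 \/ Q k%:R.
  elim: k => [|k [IH|IH]]; first by left.
  - by right; rewrite mulrS IH addr0 Q1.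
  - by rewrite mulrS; apply: H2 => //; exact: Q1.
have [v Uv nQv] := Nex.
have := Hk (val v); rewrite natr_Zp => -[v0|]; last by rewrite (negbTE nQv).
by move: Uv; rewrite v0 unitr0.
Qed.

Lemma Qnat k : (0 < k < q)%N -> Q ((k * k)%N%:R).
Proof. by move=> h; rewrite natrM -expr2; apply: Qsq; apply: nat_unit. Qed.

Lemma E2 : exists s, exists v, [/\ Q s, v \is a GRing.unit, ~~ Q v & Q (s + v)].
Proof.
have U3 : (3%:R : 'Z_q) \is a GRing.unit by apply: nat_unit; apply/andP; split => //; exact: leq_trans hq7.
have Q4 : Q 4%:R by apply: (Qnat 2); apply/andP; split => //; exact: leq_trans hq7.
have Um1 : (-1 : 'Z_q) \is a GRing.unit by rewrite unitrN unitr1.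
case: (boolP (Q 3%:R)) => Q3.
2: exists 1, 3%:R; split => //; first exact: Q1.
case: (boolP (Q (-1))) => Qm1.
  have [s0 [t0 [Qs Qt Ust nQst]]] := E1.
  exists (-1 * t0), (s0 + t0); split => //; first exact: QM.
  by rewrite mulN1r addrC addrK.
exists 4%:R, (3%:R * -1); split => //; first by rewrite unitrM U3 Um1.
  exact: QN.
by rewrite mulrN1 -[4%N]/(1+3)%N natrD addrK; exact: Q1.
Qed.

Lemma E3 : exists v, exists w, [/\ v \is a GRing.unit, ~~ Q v, w \is a GRing.unit,
  ~~ Q w & Q (v + w)].
Proof.
have [s0 [t0 [Qs Qt Ust nQst]]] := E1.
exists (s0 * (s0 + t0)), (t0 * (s0 + t0)); split.
- by rewrite unitrM Qunit.
- exact: QN.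
- by rewrite unitrM Qunit.
- exact: QN.
- by rewrite -mulrDl; apply: QNN.
Qed.

Lemma Tpre d1 d2 : d1 \is a GRing.unit -> d2 \is a GRing.unit ->
  exists r1, exists r2, [/\ Q (d1 * r1), Q (d2 * r2) & Q (r1 + r2)].
Proof.
move=> U1 U2.
have h3 : (0 < 3 < q)%N by apply/andP; split => //; exact: leq_trans hq7.
have h4 : (0 < 4 < q)%N by apply/andP; split => //; exact: leq_trans hq7.
have h5 : (0 < 5 < q)%N by apply/andP; split => //; exact: leq_trans hq7.
case: (boolP (Q d1)) => Q1'; case: (boolP (Q d2)) => Q2'.
- exists (3 * 3)%N%:R, (4 * 4)%N%:R; split.
  + by apply: QM; [exact: Q1' | exact: Qnat].
  + by apply: QM; [exact: Q2' | exact: Qnat].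
  + by rewrite -natrD (_ : (3 * 3 + 4 * 4 = 5 * 5)%N) //; exact: Qnat.
- have [s [v [Qs Uv nQv Qsv]]] := E2.
  by exists s, v; split => //; [exact: QM | exact: QNN].
- have [s [v [Qs Uv nQv Qsv]]] := E2.
  by exists v, s; split => //; [exact: QNN | exact: QM | rewrite addrC].
- have [v [w [Uv nQv Uw nQw Qvw]]] := E3.
  by exists v, w; split => //; exact: QNN.
Qed.

Lemma Tlem c1 c2 c3 : c1 \is a GRing.unit -> c2 \is a GRing.unit -> c3 \is a GRing.unit ->
  exists s1, exists s2, exists s3, [/\ Q s1, Q s2, Q s3 & c1 * s1 + c2 * s2 + c3 * s3 = 0].
Proof.
move=> U1 U2 U3.
have Ue : - c3 \is a GRing.unit by rewrite unitrN.
have Ud1 : c1^-1 * - c3 \is a GRing.unit by rewrite unitrM unitrV U1.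
have Ud2 : c2^-1 * - c3 \is a GRing.unit by rewrite unitrM unitrV U2.
have [r1 [r2 [h1 h2 h3]]] := Tpre _ _ Ud1 Ud2.
exists (c1^-1 * - c3 * r1), (c2^-1 * - c3 * r2), (r1 + r2); split => //.
by rewrite !mulrA !divrr // !mul1r -mulrDr mulNr addNr.
Qed.

End Qfacts.

Section WZS3.
Variable R : comUnitRingType.
Variable A : pred R.
Definition A0 (w : R) := w = 0 \/ A w.
Definition W3 a b c := exists w1 w2 w3, [/\ A0 w1, A0 w2, A0 w3,
  [|| w1 != 0, w2 != 0 | w3 != 0] & w1 * a + w2 * b + w3 * c = 0].
Definition W2 a b := exists w1 w2, [/\ A0 w1, A0 w2, (w1 != 0) || (w2 != 0) &
  w1 * a + w2 * b = 0].

Hypothesis Anz : forall w, A w -> w != 0.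

Lemma W3_wzs a b c : W3 a b c -> has_wzs A [:: a; b; c].
Proof.
case=> w1 [w2 [w3 [h1 h2 h3 nz e]]].
pose w := fun i : 'I_3 => nth 0 [:: w1; w2; w3] i.
exists [set i | w i != 0], w; split.
- apply/set0Pn; case/or3P: nz => h.
  + by exists (@Ordinal 3 0 isT); rewrite inE.
  + by exists (@Ordinal 3 1 isT); rewrite inE.
  + by exists (@Ordinal 3 2 isT); rewrite inE.
- move=> [[|[|[|//]]] Hi]; rewrite inE /w /=.
  + by case: h1 => [->|//]; rewrite eqxx.
  + by case: h2 => [->|//]; rewrite eqxx.
  + by case: h3 => [->|//]; rewrite eqxx.
rewrite big_mkcond (eq_bigr (fun i => w i * [:: a; b; c]`_i)); last first.
  by move=> i _; rewrite inE; case: eqP => // ->; rewrite mul0r.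
rewrite !big_ord_recl big_ord0 /w /=.
by rewrite addr0 addrA.
Qed.

Lemma wzs_W2 a b : has_wzs A [:: a; b] -> W2 a b.
Proof.
case=> I [f [nI fA e]].
pose w := fun i : 'I_2 => if i \in I then f i else 0.
have Aw : forall i, A0 (w i).
  by move=> i; rewrite /w; case: ifP => hi; [right; apply: fA | left].
exists (w ord0), (w (lift ord0 ord0)); split => //.
- case/set0Pn: nI => -[[|[|//]] Hi] hI.
  + have -> : ord0 = Ordinal Hi by apply: val_inj.
    by rewrite /w hI (Anz _ (fA _ hI)).
  + have -> : lift ord0 ord0 = Ordinal Hi :> 'I_2 by apply: val_inj.
    by rewrite /w hI (Anz _ (fA _ hI)) orbT.
move: e; rewrite big_mkcond (eq_bigr (fun i => w i * [:: a; b]`_i)); last first.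
  by move=> i _; rewrite /w; case: ifP => //; rewrite mul0r.
by rewrite !big_ord_recl big_ord0 /= addr0.
Qed.

Lemma wzs_W1 a : has_wzs A [:: a] -> exists2 w, A w & w * a = 0.
Proof.
case=> I [f [nI fA e]].
case/set0Pn: nI => -[[|//] Hi] hI.
have E0 : ord0 = Ordinal Hi by apply: val_inj.
exists (f ord0); first by rewrite E0; apply: fA.
move: e; rewrite big_mkcond big_ord1 /=.
by rewrite E0 hI.
Qed.

Lemma wzs_nil : ~ has_wzs A [::].
Proof. by case=> I [f [nI _ _]]; case/set0Pn: nI => -[]. Qed.

Lemma W3_12 a b c : W3 a b c -> W3 b a c.
Proof.
case=> w1 [w2 [w3 [h1 h2 h3 nz e]]]; exists w2, w1, w3; split => //.
  by move: nz; case: (w1 != 0); case: (w2 != 0).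
by rewrite -e (addrC (w2 * b)).
Qed.

Lemma W3_13 a b c : W3 a b c -> W3 c b a.
Proof.
case=> w1 [w2 [w3 [h1 h2 h3 nz e]]]; exists w3, w2, w1; split => //.
  by move: nz; case: (w1 != 0); case: (w2 != 0); case: (w3 != 0).
by rewrite -e; ring.
Qed.

End WZS3.

Arguments A0 {R}. Arguments W3 {R}. Arguments W2 {R}.

Lemma valZ_ltm m (x : 'Z_m) : (1 < m)%N -> (val x < m)%N.
Proof. by move=> m1; case: x => k; rewrite /= Zp_cast. Qed.

Section Zn.
Variables p' q : nat.
Hypotheses (hp : prime p') (hq : prime q) (hpq : p' != q).
Local Notation n := (p' * q)%N.

Definition rd (m : nat) (x : 'Z_n) : 'Z_m := (val x)%:R.

Lemma n_gt1 : (1 < n)%N.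
Proof. by rewrite (@leq_trans p') ?prime_gt1 // leq_pmulr // prime_gt0. Qed.

Lemma p_gt1 : (1 < p')%N. Proof. exact: prime_gt1. Qed.
Lemma q_gt1' : (1 < q)%N. Proof. exact: prime_gt1. Qed.
Lemma p_dvd : (p' %| n)%N. Proof. exact: dvdn_mulr. Qed.
Lemma q_dvd : (q %| n)%N. Proof. exact: dvdn_mull. Qed.
Lemma co_pq : coprime p' q. Proof. by rewrite prime_coprime // dvdn_prime2. Qed.

Lemma rd_nat m k : (m %| n)%N -> (1 < m)%N -> rd m (k%:R) = k%:R.
Proof.
move=> mn m1; apply: val_inj; rewrite /rd /=.
by rewrite !val_Zp_nat ?n_gt1 // modn_dvdm.
Qed.

Lemma rdD m x y : (m %| n)%N -> (1 < m)%N -> rd m (x + y) = rd m x + rd m y.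
Proof.
move=> mn m1; rewrite -[x]natr_Zp -[y]natr_Zp -natrD !rd_nat //.
by rewrite natrD.
Qed.

Lemma rdM m x y : (m %| n)%N -> (1 < m)%N -> rd m (x * y) = rd m x * rd m y.
Proof.
move=> mn m1; rewrite -[x]natr_Zp -[y]natr_Zp -natrM !rd_nat //.
by rewrite natrM.
Qed.

Lemma rd0 m : rd m 0 = 0.
Proof. by rewrite /rd. Qed.

Lemma rd1 m : (m %| n)%N -> (1 < m)%N -> rd m 1 = 1.
Proof. by move=> mn m1; rewrite (_ : (1 : 'Z_n) = 1%:R) // rd_nat. Qed.

Lemma rd0P m x : (1 < m)%N -> (rd m x == 0) = (m %| val x)%N.
Proof.
move=> m1; rewrite /dvdn -(val_Zp_nat m1) -/(rd m x).
by apply/eqP/eqP => [->//|h]; apply: val_inj.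
Qed.

Lemma Zn_eq0 x : rd p' x = 0 -> rd q x = 0 -> x = 0.
Proof.
move=> /eqP; rewrite rd0P ?p_gt1 // => h1 /eqP; rewrite rd0P ?q_gt1' // => h2.
have : (n %| val x)%N by rewrite Gauss_dvd ?co_pq // h1 h2.
have := valZ_ltm _ x n_gt1.
case: (posnP (val x)) => [h0 _ _|]; first by apply: val_inj.
by move=> pos lt /(dvdn_leq pos); rewrite leqNgt lt.
Qed.



Lemma primes_n : perm_eq (primes n) [:: p'; q].
Proof.
apply: uniq_perm; [exact: primes_uniq | by rewrite /= inE hpq | move=> r].
rewrite mem_primes !inE; apply/idP/idP.
  case/and3P => pr _; rewrite Euclid_dvdM // !dvdn_prime2 //.
case/orP => /eqP ->; rewrite ?hp ?hq muln_gt0 !prime_gt0 //=.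
  exact: dvdn_mulr.
exact: dvdn_mull.
Qed.

Lemma Lset_mem w : rd p' w \is a GRing.unit -> Qset q (rd q w) -> Lset n p' w.
Proof.
move=> Up Qq; have Uq := Qunit _ _ Qq.
move: Up Uq; rewrite /rd !unitZpE ?p_gt1 ?q_gt1' // => cp cq.
apply/andP; split.
  by rewrite -[w]natr_Zp unitZpE ?n_gt1 // coprimeMl cp cq.
rewrite /jacobi (perm_big _ primes_n) /= !big_cons big_nil.
rewrite !lognM ?prime_gt0 // !logn_prime // (eq_sym q p') (negbTE hpq) !eqxx /=.
have -> : legendre q (val w) = 1.
  have nd : ~~ (q %| val w)%N by rewrite -prime_coprime.
  rewrite /legendre (negbTE nd).
  case/QE: Qq => y Uy hy.
  have hv : (val w %% q)%N = (val y * val y %% q)%N.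
    rewrite -(val_Zp_nat q_gt1') -/(rd q w) hy expr2.
    have := natrM [the nzSemiRingType of 'Z_q] (val y) (val y); rewrite !natr_Zp => <-.
    by rewrite val_Zp_nat // q_gt1'.
  have yq : (val y < q)%N by apply: valZ_ltm; exact: q_gt1'.
  have -> // : [exists x : 'I_q, (x * x %% q == val w %% q)%N].
  by apply/existsP; exists (Ordinal yq); rewrite hv.
by rewrite expr1 expr1 !mulr1.
Qed.

Definition cw (a : 'Z_p') (b : 'Z_q) : 'Z_n := (chinese p' q (val a) (val b))%:R.

Lemma rd_cwp a b : rd p' (cw a b) = a.
Proof.
rewrite /cw rd_nat ?p_dvd ?p_gt1 //; apply: val_inj => /=.
rewrite val_Zp_nat ?p_gt1 // chinese_modl ?co_pq // modn_small //.
exact: valZ_ltm p_gt1.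
Qed.

Lemma rd_cwq a b : rd q (cw a b) = b.
Proof.
rewrite /cw rd_nat ?q_dvd ?q_gt1' //; apply: val_inj => /=.
rewrite val_Zp_nat ?q_gt1' // chinese_modr ?co_pq // modn_small //.
exact: valZ_ltm q_gt1'.
Qed.

Definition okw (a : 'Z_p') (b : 'Z_q) :=
  (a = 0 /\ b = 0) \/ (a \is a GRing.unit /\ Qset q b).

Lemma okw_A0 a b : okw a b -> A0 (Lset n p') (cw a b).
Proof.
case=> [[-> ->]|[Ua Qb]].
  by left; apply: Zn_eq0; rewrite ?rd_cwp ?rd_cwq.
by right; apply: Lset_mem; rewrite ?rd_cwp ?rd_cwq.
Qed.

Lemma lift3 x1 x2 x3 a1 a2 a3 b1 b2 b3 : okw a1 b1 -> okw a2 b2 -> okw a3 b3 ->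
  [|| b1 != 0, b2 != 0 | b3 != 0] ->
  a1 * rd p' x1 + a2 * rd p' x2 + a3 * rd p' x3 = 0 ->
  b1 * rd q x1 + b2 * rd q x2 + b3 * rd q x3 = 0 ->
  W3 (Lset n p') x1 x2 x3.
Proof.
move=> o1 o2 o3 nz ea eb.
exists (cw a1 b1), (cw a2 b2), (cw a3 b3); split; try exact: okw_A0.
  have nzc a b : b != 0 -> cw a b != 0.
    by move=> nb; apply: contraNneq nb => h; rewrite -(rd_cwq a b) h rd0.
  by case/or3P: nz => h; rewrite (nzc _ _ h) ?orbT.
have rDp x y : rd p' (x + y) = rd p' x + rd p' y := rdD _ x y p_dvd p_gt1.
have rMp x y : rd p' (x * y) = rd p' x * rd p' y := rdM _ x y p_dvd p_gt1.
have rDq x y : rd q (x + y) = rd q x + rd q y := rdD _ x y q_dvd q_gt1'.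
have rMq x y : rd q (x * y) = rd q x * rd q y := rdM _ x y q_dvd q_gt1'.
apply: Zn_eq0.
  by rewrite !(rDp, rMp) !rd_cwp.
by rewrite !(rDq, rMq) !rd_cwq.
Qed.

End Zn.

Lemma Qnz q (y : 'Z_q) : Qset q y -> y != 0.
Proof.
move=> /Qunit Uy; apply: contraTneq Uy => ->; by rewrite unitr0.
Qed.

Lemma Q_unitK q (b y : 'Z_q) : Qset q b -> b * y = 0 -> y = 0.
Proof. by move=> Qb e; rewrite -(mulKr (Qunit _ _ Qb) y) e mulr0. Qed.

Lemma EXT q (hq : prime q) (hq7 : (7 <= q)%N) (a b : 'Z_q) :
  ~ W2 (Qset q) a b -> extremal (Qset q) [:: a; b].
Proof.
move=> nW; have Anz := @Qnz q.
have Q1' := Q1 q.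
exists 3%N; split => //; last by move/(wzs_W2 _ _ Anz).
split.
  case=> [|s1 [|s2 [|s3 []]]] //= _; apply: W3_wzs.
  have [->|n1] := eqVneq s1 0.
    exists 1, 0, 0; split; try by [left | right].
      by rewrite oner_neq0.
    by rewrite mulr0 !mul0r !addr0.
  have [->|n2] := eqVneq s2 0.
    exists 0, 1, 0; split; try by [left | right].
      by rewrite oner_neq0 orbT.
    by rewrite mulr0 !mul0r !addr0.
  have [->|n3] := eqVneq s3 0.
    exists 0, 0, 1; split; try by [left | right].
      by rewrite oner_neq0 !orbT.
    by rewrite mulr0 !mul0r !addr0.
  have [t1 [t2 [t3 [h1 h2 h3 e]]]] := @Tlem q hq hq7 _ _ _ (nz_unit _ hq _ n1) (nz_unit _ hq _ n2) (nz_unit _ hq _ n3).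
  exists t1, t2, t3; split; try by right.
    by rewrite (Anz _ h1).
  by rewrite (mulrC t1) (mulrC t2) (mulrC t3).
case=> [|[|[|//]]] _ H.
- by have := H [::] erefl; apply: wzs_nil.
- have := H [:: 1] erefl; case/wzs_W1 => w Qw.
  by rewrite mulr1 => w0; move: (Anz _ Qw); rewrite w0 eqxx.
- have := H [:: a; b] erefl; by move/(wzs_W2 _ _ Anz).
Qed.

Arguments Qnz {q y}. Arguments Q_unitK {q b y}.


Section Eqv.
Variable R : comUnitRingType.
Variable A : pred R.
Hypothesis A1 : A 1.

Lemma eqv_id a b c : equiv_wrt A [:: a; b; c] [:: a; b; c].
Proof.
split => //; exists 1%g, (fun _ => 1), 1; split; first exact: unitr1.
by move=> i; split => //; rewrite perm1 !mul1r.
Qed.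

Lemma eqv_12 a b c : equiv_wrt A [:: a; b; c] [:: b; a; c].
Proof.
split => //.
exists (tperm (@Ordinal (size [:: a; b; c]) 0 isT) (@Ordinal (size [:: a; b; c]) 1 isT)),
  (fun _ => 1), 1; split; first exact: unitr1.
by move=> [[|[|[|//]]] Hi]; split => //; rewrite !mul1r /tperm permE /=.
Qed.

Lemma eqv_13 a b c : equiv_wrt A [:: a; b; c] [:: c; b; a].
Proof.
split => //.
exists (tperm (@Ordinal (size [:: a; b; c]) 0 isT) (@Ordinal (size [:: a; b; c]) 2 isT)),
  (fun _ => 1), 1; split; first exact: unitr1.
by move=> [[|[|[|//]]] Hi]; split => //; rewrite !mul1r /tperm permE /=.
Qed.
End Eqv.

Section Core.
Variables p' q : nat.
Hypotheses (hp : prime p') (hq : prime q) (hpq : p' != q).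
Hypotheses (hp7 : (7 <= p')%N) (hq7 : (7 <= q)%N).
Local Notation n := (p' * q)%N.
Local Notation A := (Lset n p').
Local Notation u := (rd p' q p').
Local Notation v := (rd p' q q).

Lemma A1 : A 1.
Proof.
apply: Lset_mem => //; rewrite rd1 ?p_dvd ?q_dvd ?p_gt1 ?q_gt1' //.
  exact: unitr1.
exact: Q1.
Qed.

Lemma Anz' w : A w -> w != 0.
Proof. by case/andP => Uw _; apply: contraTneq Uw => ->; rewrite unitr0. Qed.

Lemma okQ a b : a != 0 -> Qset q b -> okw p' q a b.
Proof. by move=> na Qb; right; split => //; exact: nz_unit. Qed.

Lemma ok00 : okw p' q 0 0. Proof. by left. Qed.

Lemma ok1 a : a != 0 -> okw p' q a 1.
Proof. by move=> na; apply: okQ => //; exact: Q1. Qed.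

Lemma x1nz x1 x2 x3 : ~ W3 A x1 x2 x3 -> x1 != 0.
Proof.
move=> nW; apply/negP => /eqP h; apply: nW; exists 1, 0, 0; split; try by left.
- by right; exact: A1.
- by rewrite oner_neq0.
- by rewrite h mulr0 !mul0r !addr0.
Qed.

Lemma uv_nz x : x != 0 -> u x != 0 \/ v x != 0.
Proof.
move=> nx; case: (eqVneq (u x) 0) => hu; last by left.
case: (eqVneq (v x) 0) => hv; last by right.
by move: nx; rewrite (@Zn_eq0 p' q hp hq hpq _ hu hv) eqxx.
Qed.

Lemma one_nzp : (1 : 'Z_q) != 0. Proof. exact: oner_neq0. Qed.

Lemma W2_Q a b : v a != 0 -> v b != 0 -> W2 (Qset q) (v a) (v b) ->
  exists b2, exists b3, [/\ Qset q b2, Qset q b3 & b2 * v a + b3 * v b = 0].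
Proof.
move=> na nb [b2 [b3 [h2 h3 nz e]]].
case: h2 => [z2|Q2]; case: h3 => [z3|Q3].
- by move: nz; rewrite z2 z3 eqxx.
- by move: e; rewrite z2 mul0r add0r => /(Q_unitK Q3) h; rewrite h eqxx in nb.
- by move: e; rewrite z3 mul0r addr0 => /(Q_unitK Q2) h; rewrite h eqxx in na.
- by exists b2, b3.
Qed.

Lemma coreA x1 x2 x3 : ~ W3 A x1 x2 x3 -> v x1 = 0 ->
  [/\ (q %| val x1)%N, ~~ (q %| val x2)%N, ~~ (q %| val x3)%N, x1 != 0 &
          extremal (Qset q) [:: (val x2)%:R; (val x3)%:R]].
Proof.
move=> nW v1.
have nx1 := x1nz _ _ _ nW.
have nx2 : x2 != 0 by apply: (x1nz x2 x1 x3) => /W3_12.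
have nx3 : x3 != 0 by apply: (x1nz x3 x2 x1) => /W3_13.
have u1 : u x1 != 0 by case: (uv_nz _ nx1) => //; rewrite v1 eqxx.
have v2 : v x2 != 0.
  apply/negP => /eqP v2; have u2 : u x2 != 0 by case: (uv_nz _ nx2) => //; rewrite v2 eqxx.
  apply: nW; apply: (@lift3 _ _ hp hq hpq _ _ _ (u x2) (- u x1) 0 1 1 0).
  - exact: ok1.
  - by apply: ok1; rewrite oppr_eq0.
  - exact: ok00.
  - by rewrite one_nzp.
  - by rewrite mulNr mulrC addrN mul0r addr0.
  - by rewrite v1 v2 !mulr0 mul0r !addr0.
have v3 : v x3 != 0.
  apply/negP => /eqP v3; have u3 : u x3 != 0 by case: (uv_nz _ nx3) => //; rewrite v3 eqxx.
  apply: nW; apply: (@lift3 _ _ hp hq hpq _ _ _ (u x3) 0 (- u x1) 1 0 1).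
  - exact: ok1.
  - exact: ok00.
  - by apply: ok1; rewrite oppr_eq0.
  - by rewrite one_nzp.
  - by rewrite mulNr mul0r addr0 mulrC addrN.
  - by rewrite v1 v3 !mulr0 mul0r !addr0.
split.
- by rewrite -rd0P ?q_gt1' // v1.
- by rewrite -rd0P ?q_gt1'.
- by rewrite -rd0P ?q_gt1'.
- exact: nx1.
apply: EXT => // /(W2_Q _ _ v2 v3) [b2 [b3 [Q2 Q3 e]]].
have nb2 := Qnz Q2; have nb3 := Qnz Q3.
apply: nW.
case: (eqVneq (u x2) 0) => u2; case: (eqVneq (u x3) 0) => u3.
- apply: (@lift3 _ _ hp hq hpq _ _ _ 0 1 1 0 b2 b3).
  + exact: ok00.
  + by apply: okQ => //; exact: oner_neq0.
  + by apply: okQ => //; exact: oner_neq0.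
  + by rewrite nb2 orbT.
  + by rewrite u2 u3 mul0r !mulr0 !addr0.
  + by rewrite mul0r add0r.
- apply: (@lift3 _ _ hp hq hpq _ _ _ (u x3) 1 (- u x1) 1 b2 b3).
  + exact: (ok1 _ u3).
  + by apply: okQ => //; exact: oner_neq0.
  + by apply: okQ; rewrite ?oppr_eq0.
  + by rewrite one_nzp.
  + by rewrite u2 mulr0 addr0 mulNr mulrC addrN.
  + by rewrite v1 mulr0 add0r.
- apply: (@lift3 _ _ hp hq hpq _ _ _ (u x2) (- u x1) 1 1 b2 b3).
  + exact: (ok1 _ u2).
  + by apply: okQ; rewrite ?oppr_eq0.
  + by apply: okQ => //; exact: oner_neq0.
  + by rewrite one_nzp.
  + by rewrite u3 mulr0 addr0 mulNr mulrC addrN.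
  + by rewrite v1 mulr0 add0r.
- apply: (@lift3 _ _ hp hq hpq _ _ _ 0 (u x3) (- u x2) 0 b2 b3).
  + exact: ok00.
  + exact: okQ.
  + by apply: okQ; rewrite ?oppr_eq0.
  + by rewrite nb2 orbT.
  + by rewrite mul0r add0r mulNr mulrC addrN.
  + by rewrite mul0r add0r.
Qed.

Lemma coreB x1 x2 x3 : ~ W3 A x1 x2 x3 -> v x1 != 0 -> v x2 != 0 -> v x3 != 0 ->
  u x2 = 0 -> u x3 = 0 ->
  [/\ coprime (val x1) p', ~~ coprime (val x2) p', ~~ coprime (val x3) p' &
      extremal (Qset q) [:: (val x2)%:R; (val x3)%:R]].
Proof.
move=> nW n1 n2 n3 u2 u3.
have cop x : coprime (val x) p' = (u x != 0).
  by rewrite coprime_sym prime_coprime // rd0P ?p_gt1.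
have u1 : u x1 != 0.
  apply/negP => /eqP u1.
  have [s1 [s2 [s3 [h1 h2 h3 e]]]] :=
    @Tlem q hq hq7 _ _ _ (nz_unit _ hq _ n1) (nz_unit _ hq _ n2) (nz_unit _ hq _ n3).
  apply: nW; apply: (@lift3 _ _ hp hq hpq _ _ _ 1 1 1 s1 s2 s3).
  + by apply: okQ => //; exact: oner_neq0.
  + by apply: okQ => //; exact: oner_neq0.
  + by apply: okQ => //; exact: oner_neq0.
  + by rewrite (Qnz h1).
  + by rewrite u1 u2 u3 !mulr0 !addr0.
  + by rewrite (mulrC s1) (mulrC s2) (mulrC s3).
split; rewrite ?cop ?u2 ?u3 ?eqxx //.
apply: EXT => // /(W2_Q _ _ n2 n3) [b2 [b3 [Q2 Q3 e]]].
apply: nW; apply: (@lift3 _ _ hp hq hpq _ _ _ 0 1 1 0 b2 b3).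
+ exact: ok00.
+ by apply: okQ => //; exact: oner_neq0.
+ by apply: okQ => //; exact: oner_neq0.
+ by rewrite (Qnz Q2) orbT.
+ by rewrite u2 u3 mul0r !mulr0 !addr0.
+ by rewrite mul0r add0r.
Qed.

Lemma select x1 x2 x3 : ~ W3 A x1 x2 x3 ->
  [\/ v x1 = 0, v x2 = 0, v x3 = 0 |
     [/\ v x1 != 0, v x2 != 0 & v x3 != 0] /\
     [\/ u x2 = 0 /\ u x3 = 0, u x1 = 0 /\ u x3 = 0 | u x1 = 0 /\ u x2 = 0]].
Proof.
move=> nW.
case: (eqVneq (v x1) 0) => [h|n1]; first by constructor 1.
case: (eqVneq (v x2) 0) => [h|n2]; first by constructor 2.
case: (eqVneq (v x3) 0) => [h|n3]; first by constructor 3.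
constructor 4; split => //.
have [s1 [s2 [s3 [h1 h2 h3 e]]]] :=
  @Tlem q hq hq7 _ _ _ (nz_unit _ hq _ n1) (nz_unit _ hq _ n2) (nz_unit _ hq _ n3).
have L a1 a2 a3 : a1 != 0 -> a2 != 0 -> a3 != 0 ->
    a1 * u x1 + a2 * u x2 + a3 * u x3 = 0 -> False.
  move=> na1 na2 na3 ea; apply: nW.
  apply: (@lift3 _ _ hp hq hpq _ _ _ a1 a2 a3 s1 s2 s3); try exact: okQ.
  - by rewrite (Qnz h1).
  - exact: ea.
  - by rewrite (mulrC s1) (mulrC s2) (mulrC s3).
have Up x : x != 0 -> x \is a GRing.unit := nz_unit _ hp x.
case: (eqVneq (u x1) 0) => u1; case: (eqVneq (u x2) 0) => u2;
  case: (eqVneq (u x3) 0) => u3.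
- by constructor 1.
- by constructor 3.
- by constructor 2.
- exfalso; apply: (L 1 (u x3) (- u x2)); rewrite ?oner_neq0 ?oppr_eq0 //.
  by rewrite u1 mulr0 add0r mulNr mulrC addrN.
- by constructor 1.
- exfalso; apply: (L (u x3) 1 (- u x1)); rewrite ?oner_neq0 ?oppr_eq0 //.
  by rewrite u2 mulr0 addr0 mulNr mulrC addrN.
- exfalso; apply: (L (u x2) (- u x1) 1); rewrite ?oner_neq0 ?oppr_eq0 //.
  by rewrite u3 mulr0 addr0 mulNr mulrC addrN.
- exfalso.
  have U2 : (2%:R : 'Z_p') \is a GRing.unit.
    by apply: (nat_unit _ hp); apply/andP; split => //; exact: leq_trans hp7.
  apply: (L (u x2 * u x3) (u x1 * u x3) (- (2%:R * u x1 * u x2))).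
  + by apply: unit_nz; rewrite unitrM !Up.
  + by apply: unit_nz; rewrite unitrM !Up.
  + by apply: unit_nz; rewrite unitrN !unitrM U2 !Up.
  + ring.
Qed.

Lemma main_sec (x1 x2 x3 : 'Z_(p' * q)) :
  extremal (Lset (p' * q) p') [:: x1; x2; x3] ->
  exists y1 y2 y3 : 'Z_(p' * q),
    equiv_wrt (Lset (p' * q) p') [:: x1; x2; x3] [:: y1; y2; y3] /\
    ( [/\ (q %| val y1)%N, ~~ (q %| val y2)%N, ~~ (q %| val y3)%N, y1 != 0 &
          extremal (Qset q) [:: (val y2)%:R; (val y3)%:R]]
      \/
      [/\ coprime (val y1) p', ~~ coprime (val y2) p', ~~ coprime (val y3) p' &
          extremal (Qset q) [:: (val y2)%:R; (val y3)%:R]] ).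
Proof.
case=> k [_ _ nW].
have nW3 : ~ W3 A x1 x2 x3 by move/W3_wzs.
case: (select _ _ _ nW3) => [v1|v2|v3|[[n1 n2 n3] [[u2 u3]|[u1 u3]|[u1 u2]]]].
- exists x1, x2, x3; split; first by apply: eqv_id; exact: A1.
  by left; apply: coreA.
- exists x2, x1, x3; split; first by apply: eqv_12; exact: A1.
  by left; apply: coreA => // /W3_12.
- exists x3, x2, x1; split; first by apply: eqv_13; exact: A1.
  by left; apply: coreA => // /W3_13.
- exists x1, x2, x3; split; first by apply: eqv_id; exact: A1.
  by right; apply: coreB.
- exists x2, x1, x3; split; first by apply: eqv_12; exact: A1.
  by right; apply: coreB => // /W3_12.
- exists x3, x2, x1; split; first by apply: eqv_13; exact: A1.
  by right; apply: coreB => // /W3_13.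
Qed.
End Core.

Theorem theorem5p5 (p' q : nat) (hp : prime p') (hq : prime q) (hpq : p' != q)
  (hp7 : (7 <= p')%N) (hq7 : (7 <= q)%N) (x1 x2 x3 : 'Z_(p' * q)) :
  extremal (Lset (p' * q) p') [:: x1; x2; x3] ->
  exists y1 y2 y3 : 'Z_(p' * q),
    equiv_wrt (Lset (p' * q) p') [:: x1; x2; x3] [:: y1; y2; y3] /\
    ( [/\ (q %| val y1)%N, ~~ (q %| val y2)%N, ~~ (q %| val y3)%N, y1 != 0 &
          extremal (Qset q) [:: (val y2)%:R; (val y3)%:R]]
      \/
      [/\ coprime (val y1) p', ~~ coprime (val y2) p', ~~ coprime (val y3) p' &
          extremal (Qset q) [:: (val y2)%:R; (val y3)%:R]] ).
Proof. exact: main_sec. Qed.
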